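(* Let $\mathbf A\in\mathbb C^{m\times n}$, $\mathbf B\in\mathbb C^{m\times s}$, let $\mathbf X_{LS}=(x_{ij})\in\mathbb C^{n\times s}$ be the minimum norm least squares solution of $\mathbf A\mathbf X=\mathbf B$, and let $\hat{\mathbf B}=\mathbf A^{*}\mathbf B$ with $j$-th column $\hat{\mathbf b}_{.j}$. (i) If $\operatorname{rank}\mathbf A=r\le m<n$, then for all $i=1,\dots,n$, $j=1,\dots,s$, \[x_{ij}=\frac{\sum_{\beta\in J_{r,n}\{i\}}\left|\left((\mathbf A^{*}\mathbf A)_{.i}(\hat{\mathbf b}_{.j})\right)^{\beta}_{\beta}\right|}{\sum_{\beta\in J_{r,n}}\left|(\mathbf A^{*}\mathbf A)^{\beta}_{\beta}\right|}.\] (ii) If $\operatorname{rank}\mathbf A=n$, then for all $i=1,\dots,n$, $j=1,\dots,s$, $x_{ij}=\dfrac{\det\left((\mathbf A^{*}\mathbf A)_{.i}(\hat{\mathbf b}_{.j})\right)}{\det(\mathbf A^{*}\mathbf A)}$.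
   Context: $\mathbf X_{LS}$ is the matrix of minimal Frobenius norm among all $\mathbf X\in\mathbb C^{n\times s}$ minimizing the Frobenius norm $\|\mathbf A\mathbf X-\mathbf B\|$. $\mathbf M_{.i}(\mathbf c)$ denotes $\mathbf M$ with its $i$-th column replaced by $\mathbf c$. $J_{r,n}$ is the set of strictly increasing sequences of $r$ elements of $\{1,\dots,n\}$, $J_{r,n}\{i\}=\{\beta\in J_{r,n}:i\in\beta\}$, $\mathbf M^{\beta}_{\beta}$ is the principal submatrix indexed by $\beta$, $|\cdot|$ is the determinant. *)

(* Defs.v *)
From HB Require Import structures.
From mathcomp Require Import all_boot all_order all_algebra.
From mathcomp Require Import complex.
From mathcomp Require Import reals.
Set Implicit Arguments. Unset Strict Implicit. Unset Printing Implicit Defensive.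
Import Order.TTheory GRing.Theory Num.Theory.
Local Open Scope ring_scope.

Section Defs.
Variable C : numClosedFieldType.

Definition conjT m n (A : 'M[C]_(m, n)) : 'M[C]_(n, m) := (map_mx Num.conj A)^T.

(* squared Frobenius norm (the Frobenius norm is its square root; minimizing
   either is the same) *)
Definition frob2 m n (M : 'M[C]_(m, n)) : C := \sum_i \sum_j `|M i j| ^+ 2.

Definition is_LS m n s (A : 'M[C]_(m, n)) (B : 'M[C]_(m, s)) (X : 'M[C]_(n, s)) :=
  forall Y : 'M[C]_(n, s), frob2 (A *m X - B) <= frob2 (A *m Y - B).

Definition is_min_norm_LS m n s (A : 'M[C]_(m, n)) (B : 'M[C]_(m, s))
  (X : 'M[C]_(n, s)) :=
  is_LS A B X /\ forall Y, is_LS A B Y -> frob2 X <= frob2 Y.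

Definition col_repl m n (M : 'M[C]_(m, n)) (i : 'I_n) (c : 'cV[C]_m) : 'M[C]_(m, n) :=
  \matrix_(k, l) if l == i then c k 0 else M k l.

(* |M^beta_beta| : determinant of the principal submatrix indexed by beta,
   beta listed in increasing order (enum of a set of ordinals is increasing). *)
Definition pminor n (M : 'M[C]_n) (beta : {set 'I_n}) : C :=
  \det (mxsub (fun k : 'I_#|beta| => enum_val k) (fun k : 'I_#|beta| => enum_val k) M).

End Defs.

(* Main.v *)
Require Import Defs.
From HB Require Import structures.
From mathcomp Require Import all_boot all_order all_algebra.
From mathcomp Require Import complex reals zify fingroup perm ring.
Set Implicit Arguments. Unset Strict Implicit. Unset Printing Implicit Defensive.
Import Order.TTheory GRing.Theory Num.Theory.
Local Open Scope ring_scope.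

Section Gen.
Variable R : comNzRingType.

Definition gpminor n (M : 'M[R]_n) (beta : {set 'I_n}) : R :=
  \det (mxsub (fun k : 'I_#|beta| => enum_val k) (fun k : 'I_#|beta| => enum_val k) M).

Definition padR n (M : 'M[R]_n) (S : {set 'I_n}) : 'M[R]_n :=
  \matrix_(i, j) if i \in S then M i j else (i == j)%:R.

Definition diagm n (d : 'I_n -> R) : 'M[R]_n := \matrix_(i, j) ((i == j)%:R * d i).

Lemma det_add_diag n (M : 'M[R]_n) (d : 'I_n -> R) :
  \det (M + diagm d) =
  \sum_(S : {set 'I_n}) (\prod_(i in ~: S) d i) * \det (padR M S).
Proof.
rewrite /determinant.
under eq_bigr => s _.
  rewrite (eq_bigr (fun i => M i (s i) + (i == s i)%:R * d i)); last first.
    by move=> i _; rewrite !mxE.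
  rewrite bigA_distr.
  over.
under eq_bigr => s _ do rewrite big_distrr /=.
rewrite /= exchange_big /=; apply: eq_bigr => S _.
rewrite big_distrr /=.
apply: eq_bigr => s _.
rewrite mulrCA; congr (_ * _).
have -> : \prod_(i in ~: S) d i = \prod_i (if i \in S then 1 else d i).
  rewrite big_mkcond; apply: eq_bigr => i _; rewrite in_setC.
  by case: (i \in S).
rewrite -big_split; apply: eq_bigr => i _; rewrite /padR mxE.
case: (i \in S) => /=.
  by rewrite mul1r.
by rewrite mulrC.
Qed.


Lemma det_mxsub_inj p n (h : 'I_p -> 'I_n) (N : 'M[R]_n) :
  p = n -> injective h -> \det (mxsub h h N) = \det N.
Proof.
move=> e; subst p => hinj.
pose s := perm hinj.
have -> : mxsub h h N = row_perm s (col_perm s N).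
  by apply/matrixP => i j; rewrite !mxE !permE.
rewrite row_permE col_permE !det_mulmx !det_perm odd_permV.
by rewrite mulrCA -signr_addb addbb expr0 mulr1.
Qed.

Lemma det_padR n (M : 'M[R]_n) (S : {set 'I_n}) :
  \det (padR M S) = gpminor M S.
Proof.
pose k := #|S|.
pose h (j : 'I_(k + #|~: S|)) : 'I_n :=
  match split j with inl a => enum_val (A := mem S) a | inr b => enum_val (A := mem (~: S)) b end.
have hl : forall a, h (lshift _ a) = enum_val (A := mem S) a.
  by move=> a; rewrite /h -[lshift _ a]/(unsplit (inl a)) unsplitK.
have hr : forall b, h (rshift _ b) = enum_val (A := mem (~: S)) b.
  by move=> b; rewrite /h -[rshift _ b]/(unsplit (inr b)) unsplitK.
have hinj : injective h.
  move=> i1 i2; rewrite -[i1]splitK -[i2]splitK.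
  case: (split i1) => a; case: (split i2) => b.
  - by rewrite hl hl => /enum_val_inj ->.
  - rewrite hl hr => E; have := enum_valP (A := mem S) a.
    by rewrite E; have := enum_valP (A := mem (~: S)) b; rewrite !inE => /negbTE ->.
  - rewrite hl hr => E; have := enum_valP (A := mem S) b.
    by rewrite -E; have := enum_valP (A := mem (~: S)) a; rewrite !inE => /negbTE ->.
  - by rewrite hr hr => /enum_val_inj ->.
have ecard : (k + #|~: S| = n)%N by rewrite /k cardsC card_ord.
rewrite -(det_mxsub_inj (padR M S) ecard hinj).
set Q := mxsub h h (padR M S).
have dl0 : dlsubmx Q = 0.
  apply/matrixP => a b; rewrite !mxE hr hl.
  have := enum_valP (A := mem (~: S)) a; rewrite !inE => /negbTE ->.
  case: eqP => // E; have := enum_valP (A := mem S) b.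
  by rewrite -E; have := enum_valP (A := mem (~: S)) a; rewrite !inE => /negbTE ->.
have dr1 : drsubmx Q = 1%:M.
  apply/matrixP => a b; rewrite !mxE hr hr.
  have := enum_valP (A := mem (~: S)) a; rewrite !inE => /negbTE ->.
  by rewrite (inj_eq enum_val_inj).
have ul : ulsubmx Q = mxsub (fun k : 'I_#|S| => enum_val k) (fun k : 'I_#|S| => enum_val k) M.
  apply/matrixP => a b; rewrite !mxE hl hl.
  by rewrite (enum_valP (A := mem S) a).
by rewrite -(submxK Q) dl0 dr1 det_ublock det1 mulr1 ul.
Qed.

Lemma det_add_diag_pminor n (M : 'M[R]_n) (d : 'I_n -> R) :
  \det (M + diagm d) =
  \sum_(S : {set 'I_n}) (\prod_(i in ~: S) d i) * gpminor M S.
Proof. by rewrite det_add_diag; apply: eq_bigr => S _; rewrite det_padR. Qed.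

Definition gcol_repl m n (M : 'M[R]_(m, n)) (i : 'I_n) (c : 'cV[R]_m) : 'M[R]_(m, n) :=
  \matrix_(k, l) if l == i then c k 0 else M k l.

Lemma det_col_repl n (T : 'M[R]_n) i c :
  \det (gcol_repl T i c) = (\adj T *m c) i 0.
Proof.
rewrite (expand_det_col _ i) mxE; apply: eq_bigr => k _.
rewrite !mxE eqxx mulrC; congr (_ * _); rewrite /cofactor; congr (_ * _).
congr (\det _); apply/matrixP => a b; rewrite !mxE.
by rewrite eq_sym (negbTE (neq_lift i b)).
Qed.

End Gen.

Section CPart.
Variable C : numClosedFieldType.

Lemma conjT_mul m n p (P : 'M[C]_(m, n)) (Q : 'M[C]_(n, p)) :
  conjT (P *m Q) = conjT Q *m conjT P.
Proof. by rewrite /conjT map_mxM trmx_mul. Qed.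

Lemma conjTK m n (P : 'M[C]_(m, n)) : conjT (conjT P) = P.
Proof. by apply/matrixP => i j; rewrite !mxE conjCK. Qed.

Lemma conjTB m n (P Q : 'M[C]_(m, n)) : conjT (P - Q) = conjT P - conjT Q.
Proof. by apply/matrixP => i j; rewrite !mxE rmorphB. Qed.

Lemma conjTZ m n a (P : 'M[C]_(m, n)) : conjT (a *: P) = a^* *: conjT P.
Proof. by apply/matrixP => i j; rewrite !mxE rmorphM. Qed.

Lemma rank_conjT m n (P : 'M[C]_(m, n)) : \rank (conjT P) = \rank P.
Proof. by rewrite /conjT mxrank_tr mxrank_map. Qed.

Lemma rV_conj0 p (v : 'rV[C]_p) : v *m conjT v = 0 -> v = 0.
Proof.
move=> /matrixP /(_ 0 0); rewrite [LHS]mxE [RHS]mxE => E.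
have E' : \sum_k v 0 k * (v 0 k)^* = 0.
  by rewrite -[RHS]E; apply: eq_bigr => k _; rewrite !mxE.
have H0 := psumr_eq0P (fun k _ => mul_conjC_ge0 (v 0 k)) E'.
apply/matrixP => i j; rewrite (ord1 i) mxE.
by have /eqP := H0 j isT; rewrite mul_conjC_eq0 => /eqP.
Qed.

Lemma rank_gram m n (M : 'M[C]_(m, n)) : \rank (conjT M *m M) = \rank M.
Proof.
apply/eqP; rewrite eqn_leq mxrankM_maxr /=.
have sK : (kermx (conjT M *m M) <= kermx (conjT M))%MS.
  apply/sub_kermxP; apply/row_matrixP => k; rewrite row0 row_mul.
  set u := row k _.
  have hu : u *m (conjT M *m M) = 0 by rewrite /u -row_mul mulmx_ker row0.
  apply: rV_conj0; rewrite conjT_mul conjTK !mulmxA.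
  by rewrite -(mulmxA u) hu mul0mx.
have := mxrankS sK; rewrite !mxrank_ker rank_conjT.
have := rank_leq_col M; have := rank_leq_col (conjT M *m M); lia.
Qed.


Lemma exists_W m n s (A : 'M[C]_(m, n)) (B : 'M[C]_(m, s)) :
  exists W : 'M[C]_(m, s), conjT A *m A *m (conjT A *m W) = conjT A *m B.
Proof.
set N := conjT A.
have eA : A = conjT N by rewrite /N conjTK.
have rk : \rank (N *m conjT N *m N) = \rank N.
  apply/eqP; rewrite eqn_leq -mulmxA mxrankM_maxl /=.
  set P := conjT N *m N.
  have hP : conjT P = P by rewrite /P conjT_mul conjTK.
  apply: leq_trans (mxrankM_maxr (conjT N) _).
  by rewrite mulmxA -/P -{1}hP rank_gram /P rank_gram.
have s1 : ((N *m conjT N *m N)^T <= N^T)%MS.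
  by rewrite -mulmxA trmx_mul submxMl.
have s2 : (N^T <= (N *m conjT N *m N)^T)%MS.
  by rewrite -(mxrank_leqif_sup s1).2 !mxrank_tr rk /N /conjT mxrank_tr.
have s3 : ((N *m B)^T <= (N *m conjT N *m N)^T)%MS.
  by rewrite trmx_mul; apply: submx_trans s2; apply: submxMl.
case/submxP: s3 => D hD.
exists D^T; rewrite eA conjTK -/N -[N *m B]trmxK hD trmx_mul trmxK.
by rewrite {1}eA !mulmxA.
Qed.

Definition ip m n (M N : 'M[C]_(m, n)) : C := \sum_i \sum_j (M i j)^* * N i j.

Lemma frob2_ip m n (M : 'M[C]_(m, n)) : frob2 M = ip M M.
Proof. by apply: eq_bigr => i _; apply: eq_bigr => j _; rewrite normCKC. Qed.

Lemma frob2D m n (M N : 'M[C]_(m, n)) :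
  frob2 (M + N) = frob2 M + frob2 N + (ip M N + ip N M).
Proof.
rewrite !frob2_ip /ip -!big_split; apply: eq_bigr => i _.
rewrite -!big_split; apply: eq_bigr => j _; rewrite !mxE rmorphD /=.
ring.
Qed.

Lemma ipC m n (M N : 'M[C]_(m, n)) : ip N M = (ip M N)^*.
Proof.
rewrite /ip rmorph_sum; apply: eq_bigr => i _; rewrite rmorph_sum.
by apply: eq_bigr => j _; rewrite rmorphM /= conjCK mulrC.
Qed.

Lemma ip_mulr m n p (M : 'M[C]_(m, n)) (P : 'M[C]_(m, p)) (N : 'M[C]_(p, n)) :
  ip M (P *m N) = ip (conjT P *m M) N.
Proof.
rewrite /ip.
transitivity (\sum_i \sum_j \sum_k (M i j)^* * (P i k * N k j)).
  by apply: eq_bigr => i _; apply: eq_bigr => j _; rewrite mxE big_distrr.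
transitivity (\sum_k \sum_j \sum_i (M i j)^* * (P i k * N k j)); last first.
  apply: eq_bigr => k _; apply: eq_bigr => j _; rewrite mxE rmorph_sum big_distrl.
  by apply: eq_bigr => i _; rewrite !mxE rmorphM /= conjCK; ring.
rewrite (exchange_big _ _ _ xpredT xpredT (fun i j => \sum_k (M i j)^* * (P i k * N k j))) /=.
transitivity (\sum_(j < n) \sum_(k < p) \sum_(i < m) (M i j)^* * (P i k * N k j)).
  by apply: eq_bigr => j _; apply: exchange_big.
by apply: exchange_big.
Qed.

Lemma frob2_ge0 m n (M : 'M[C]_(m, n)) : 0 <= frob2 M.
Proof. by apply: sumr_ge0 => i _; apply: sumr_ge0 => j _; apply: exprn_ge0. Qed.

Lemma frob2_le0 m n (M : 'M[C]_(m, n)) : frob2 M <= 0 -> M = 0.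
Proof.
move=> h; have h0 : frob2 M = 0 by apply/le_anti; rewrite h frob2_ge0.
have g1 : forall i j, 0 <= `|M i j| ^+ 2 by move=> i j; apply: exprn_ge0.
have g2 : forall i, 0 <= \sum_j `|M i j| ^+ 2.
  by move=> i; apply: sumr_ge0 => j _.
apply/matrixP => i j; rewrite mxE.
have := @psumr_eq0P _ _ _ _ (fun i _ => g2 i) h0 i isT.
move=> /(psumr_eq0P (fun j _ => g1 i j)) /(_ j isT) /eqP.
by rewrite sqrf_eq0 normr_eq0 => /eqP.
Qed.

Lemma ip0l m n (E : 'M[C]_(m, n)) : ip 0 E = 0.
Proof. by apply: big1 => i _; apply: big1 => j _; rewrite mxE conjC0 mul0r. Qed.

Lemma frob20 m n : frob2 (0 : 'M[C]_(m, n)) = 0.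
Proof. by apply: big1 => i _; apply: big1 => j _; rewrite mxE normr0 expr0n. Qed.

Lemma LS_eq m n s (A : 'M[C]_(m, n)) (B : 'M[C]_(m, s)) X W :
  is_min_norm_LS A B X -> conjT A *m A *m (conjT A *m W) = conjT A *m B ->
  X = conjT A *m W.
Proof.
case=> hLS hmin hW.
set Y := conjT A *m W.
set R0 := A *m Y - B.
have hR : conjT A *m R0 = 0 by rewrite /R0 mulmxBr mulmxA hW subrr.
have pyth : forall Z, frob2 (A *m Z - B) = frob2 R0 + frob2 (A *m (Z - Y)).
  move=> Z; have -> : A *m Z - B = R0 + A *m (Z - Y).
    by rewrite /R0 mulmxBr [RHS]addrC addrA subrK.
  rewrite frob2D [ip (A *m _) R0]ipC ip_mulr hR ip0l conjC0.
  by rewrite !addr0.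
have YLS : is_LS A B Y.
  move=> Z; rewrite (pyth Z) (pyth Y) subrr mulmx0 frob20 addr0 lerDl.
  exact: frob2_ge0.
have AE : A *m (X - Y) = 0.
  apply: frob2_le0; have := hLS Y.
  by rewrite (pyth X) (pyth Y) subrr mulmx0 frob20 addr0 gerDl.
have := hmin Y YLS.
have -> : X = Y + (X - Y) by rewrite addrC subrK.
rewrite frob2D [ip Y _]ipC.
have -> : ip (X - Y) Y = 0 by rewrite /Y ip_mulr conjTK AE ip0l.
rewrite conjC0 !addr0 gerDl => /frob2_le0 E0.
by rewrite E0 addr0.
Qed.

Lemma gram_ge0 k : forall m (B : 'M[C]_(m, k)), 0 <= \det (conjT B *m B).
Proof.
elim: k => [|k IH] m B; first by rewrite det_mx00 ler01.
move: B; change k.+1 with (1 + k)%N => B.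
rewrite -(hsubmxK B).
set u := lsubmx _; set V := rsubmx _.
have ctr : conjT (row_mx u V) = col_mx (conjT u) (conjT V).
  by rewrite /conjT map_row_mx tr_row_mx.
rewrite ctr mul_col_row.
set a := conjT u *m u.
set al := a 0 0.
have ha : a = al%:M by apply: mx11_scalar.
have al_ge0 : 0 <= al.
  rewrite /al /a mxE; apply: sumr_ge0 => j _; rewrite !mxE mulrC.
  exact: mul_conjC_ge0.
have [al0|alN0] := eqVneq al 0.
  have u0 : u = 0.
    have : conjT u = 0.
      by apply: rV_conj0; rewrite conjTK -/a ha al0 raddf0.
    by move=> h; rewrite -[u]conjTK h; apply/matrixP => i j; rewrite !mxE conjC0.
  have -> : conjT u *m V = 0 by rewrite u0 /conjT; apply/matrixP => i j; rewrite !mxE big1 // => l _; rewrite !mxE conjC0 mul0r.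
  by rewrite det_lblock -/a ha al0 det_mx11 mxE mul0r.
set b := conjT u *m V; set c := conjT V *m u; set d := conjT V *m V.
have alr : al \is Num.real by apply: ger0_real.
have alc : al^-1^* = al^-1 by rewrite rmorphV /= ?conj_Creal // unitfE.
have fact : block_mx a b c d =
    block_mx 1%:M 0 (al^-1 *: c) 1%:M *m block_mx a b 0 (d - al^-1 *: (c *m b)).
  rewrite mulmx_block !mul1mx !mul0mx ?addr0 ?add0r ?mulmx0 ?mulmx1 ?addr0.
  rewrite {3}ha -scalemxAl mul_mx_scalar scalerA mulVf // scale1r.
  by rewrite -scalemxAl addrCA subrr addr0.
rewrite fact det_mulmx det_lblock det_ublock !det1 !mul1r det_mx11.
apply: mulr_ge0 => //.
set W' := V - al^-1 *: (u *m b).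
have -> : d - al^-1 *: (c *m b) = conjT W' *m W'.
  rewrite /W' conjTB conjTZ alc conjT_mul -/c.
  have cb : conjT b = c by rewrite /b conjT_mul conjTK.
  rewrite cb mulmxBl !mulmxBr -/d.
  have e1 : conjT V *m (al^-1 *: (u *m b)) = al^-1 *: (c *m b).
    by rewrite -scalemxAr mulmxA.
  have e2 : al^-1 *: (c *m conjT u) *m V = al^-1 *: (c *m b).
    by rewrite -scalemxAl -mulmxA.
  have e3 : al^-1 *: (c *m conjT u) *m (al^-1 *: (u *m b)) = al^-1 *: (c *m b).
    rewrite -scalemxAl -scalemxAr scalerA !mulmxA -(mulmxA c (conjT u) u) -/a ha.
    by rewrite mul_mx_scalar -!scalemxAl scalerA mulfVK // mulmxA.
  by rewrite e1 e2 e3 subrr subr0.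
exact: IH.
Qed.

Lemma gpminor_rank m n (P : 'M[C]_(n, m)) (Q : 'M[C]_(m, n)) (S : {set 'I_n}) :
  (\rank P < #|S|)%N -> gpminor (P *m Q) S = 0.
Proof.
move=> hr; rewrite /gpminor mxsub_mul; apply/eqP; apply: contraLR hr => hd.
have hu : (rowsub (fun k : 'I_#|S| => enum_val k) P *m
           colsub (fun k : 'I_#|S| => enum_val k) Q) \in unitmx.
  by rewrite unitmxE unitfE.
rewrite -leqNgt -{1}(mxrank_unit hu).
apply: leq_trans (mxrankM_maxl _ _) _; apply: mxrankS.
by apply/row_subP => k; rewrite row_rowsub row_sub.
Qed.

Lemma col_repl_mul m n (P : 'M[C]_(n, m)) (Q : 'M[C]_(m, n)) i (v : 'cV[C]_m) :
  gcol_repl (P *m Q) i (P *m v) = P *m gcol_repl Q i v.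
Proof.
apply/matrixP => k l; rewrite /gcol_repl !mxE.
by case: (boolP (l == i)) => h; apply: eq_bigr => j _; rewrite mxE ?h // (negbTE h).
Qed.

Lemma gpminor_gram m n (A : 'M[C]_(m, n)) (S : {set 'I_n}) :
  gpminor (conjT A *m A) S =
  \det (conjT (colsub (fun k : 'I_#|S| => enum_val k) A) *m
        colsub (fun k : 'I_#|S| => enum_val k) A).
Proof.
rewrite /gpminor mxsub_mul; congr (\det (_ *m _)).
by apply/matrixP => a b; rewrite !mxE.
Qed.

Lemma exists_S0 m n (A : 'M[C]_(m, n)) :
  exists S : {set 'I_n}, (#|S| == \rank A) && (gpminor (conjT A *m A) S != 0).
Proof.
set f := maxrankfun A^T.
exists [set f k | k : 'I_(\rank A^T)].
set S := [set f k | k : 'I_(\rank A^T)].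
have cS : #|S| = \rank A.
  by rewrite card_imset ?card_ord ?mxrank_tr //; exact: maxrankfun_inj.
rewrite cS eqxx /= gpminor_gram.
set e := (fun k : 'I_#|S| => enum_val k).
rewrite -unitfE -unitmxE -row_free_unit /row_free rank_gram.
have -> : \rank (colsub e A) = \rank (rowsub e A^T).
  by rewrite -mxrank_tr; congr (\rank _); apply/matrixP => a b; rewrite !mxE.
rewrite eqn_leq rank_leq_row /=.
have : (rowsub f A^T <= rowsub e A^T)%MS.
  apply/row_subP => k; rewrite row_rowsub.
  have fk : f k \in S by apply: imset_f.
  have := row_sub (enum_rank_in fk (f k)) (rowsub e A^T).
  by rewrite row_rowsub /e (enum_rankK_in fk fk).
move/mxrankS => h; apply: leq_trans h.
by rewrite (eq_maxrowsub A^T) mxrank_tr cS.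
Qed.

Lemma D_gt0 m n (A : 'M[C]_(m, n)) :
  0 < \sum_(S : {set 'I_n} | #|S| == \rank A) gpminor (conjT A *m A) S.
Proof.
have [S0 /andP [cS nz]] := exists_S0 A.
rewrite (bigD1 S0) //=; apply: ltr_pwDl.
  by rewrite lt0r nz gpminor_gram gram_ge0.
by apply: sumr_ge0 => S _; rewrite gpminor_gram gram_ge0.
Qed.

Lemma card_setC_n n (S : {set 'I_n}) : #|~: S| = (n - #|S|)%N.
Proof. by have := cardsC S; rewrite card_ord; lia. Qed.

Lemma card_set_le n (S : {set 'I_n}) : (#|S| <= n)%N.
Proof. by have := max_card (mem S); rewrite card_ord. Qed.

Lemma coef_sumX n (P : pred {set 'I_n}) (c : {set 'I_n} -> C) k :
  (k <= n)%N ->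
  (\sum_(S : {set 'I_n}) (if P S then 'X^(n - #|S|) else 0) * (c S)%:P)`_(n - k)
  = \sum_(S | P S && (#|S| == k)) c S.
Proof.
move=> hk; rewrite coef_sum [RHS]big_mkcond; apply: eq_bigr => S _.
case: (P S) => /=; last by rewrite mul0r coef0.
rewrite mulrC coefCM coefXn.
have cS := card_set_le S.
have -> : (n - k == n - #|S|)%N = (#|S| == k) by apply/eqP/eqP; lia.
by case: eqP; rewrite ?mulr1 ?mulr0.
Qed.

Lemma key n (H : 'M[C]_n) (i : 'I_n) (x : 'cV[C]_n) r :
  (r <= n)%N ->
  (forall S : {set 'I_n}, #|S| = r.+1 -> gpminor (gcol_repl H i x) S = 0) ->
  (\sum_(S : {set 'I_n} | #|S| == r) gpminor H S) * x i 0 =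
  \sum_(S : {set 'I_n} | (#|S| == r) && (i \in S)) gpminor (gcol_repl H i (H *m x)) S.
Proof.
move=> hr hvan.
pose Hp := map_mx polyC H.
pose T := Hp + 'X%:M.
have Ediag : forall v : 'cV[C]_n, gcol_repl T i (map_mx polyC v) =
    map_mx polyC (gcol_repl H i v) + diagm (fun l => if l == i then 0 else 'X).
  move=> v; apply/matrixP => k l; rewrite /gcol_repl /diagm !mxE.
  case: (boolP (l == i)) => hl.
    by case: eqP => [->|_]; rewrite ?hl ?mul0r ?mulr0 ?addr0.
  by case: eqP => [->|_]; rewrite ?(negbTE hl) ?mulr1n ?mul1r ?mulr0n ?mul0r.
have map_gp : forall (M : 'M[C]_n) S, gpminor (map_mx polyC M) S = (gpminor M S)%:P.
  by move=> M S; rewrite /gpminor -map_mxsub det_map_mx.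
have EF : forall v, \det (gcol_repl T i (map_mx polyC v)) =
    \sum_(S : {set 'I_n}) (if i \in S then 'X^(n - #|S|) else 0) * (gpminor (gcol_repl H i v) S)%:P.
  move=> v; rewrite Ediag det_add_diag_pminor; apply: eq_bigr => S _.
  rewrite map_gp; congr (_ * _).
  case: (boolP (i \in S)) => hi.
    rewrite (eq_bigr (fun _ => 'X)) ?prodr_const ?card_setC_n //.
    move=> l; rewrite in_setC => hl; case: eqP => // E.
    by rewrite E hi in hl.
  by rewrite (bigD1 i) ?in_setC //= eqxx mul0r.
have ET : \det T = \sum_(S : {set 'I_n}) (if xpredT S then 'X^(n - #|S|) else 0) * (gpminor H S)%:P.
  have -> : T = Hp + diagm (fun _ => 'X).
    by apply/matrixP => k l; rewrite !mxE; case: eqP; rewrite ?mulr1n ?mul1r ?mulr0n ?mul0r.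
  rewrite det_add_diag_pminor; apply: eq_bigr => S _.
  by rewrite map_gp prodr_const card_setC_n.
have Ec : map_mx polyC (H *m x) = T *m map_mx polyC x - 'X *: map_mx polyC x.
  by rewrite map_mxM /T mulmxDl mul_scalar_mx addrK.
have EQ : \det (gcol_repl T i (map_mx polyC (H *m x))) =
    \det T * (x i 0)%:P - 'X * \det (gcol_repl T i (map_mx polyC x)).
  rewrite !det_col_repl Ec mulmxBr mulmxA mul_adj_mx mul_scalar_mx -scalemxAr.
  by rewrite !mxE.
have := congr1 (fun p : {poly C} => p`_(n - r)) EQ.
rewrite /= EF ET EF coefB coefMC !coef_sumX // coefXM.
have -> : (if (n - r == 0)%N then 0 else
    (\sum_(S : {set 'I_n}) (if i \in S then 'X^(n - #|S|) else 0) * (gpminor (gcol_repl H i x) S)%:P)`_(n - r).-1) = 0.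
  case: eqP => // hnr; rewrite coef_sum; apply: big1 => S _.
  case: (boolP (i \in S)) => hi; last by rewrite mul0r coef0.
  rewrite mulrC coefCM coefXn.
  have cS := card_set_le S.
  case: eqP => E; last by rewrite mulr0.
  by rewrite hvan ?mul0r //; lia.
rewrite subr0 => E.
have := coef_sumX xpredT (gpminor H) hr; rewrite /= => h; rewrite h in E.
rewrite -E; apply: eq_bigl => S; by rewrite andbC.
Qed.

Lemma col_mulmx m n p (P : 'M[C]_(m, n)) (Q : 'M[C]_(n, p)) j :
  col j (P *m Q) = P *m col j Q.
Proof. by rewrite !colE mulmxA. Qed.

Lemma main m n s (A : 'M[C]_(m, n)) (B : 'M[C]_(m, s)) (X : 'M[C]_(n, s)) :
  is_min_norm_LS A B X -> forall i j,
  X i j = (\sum_(beta : {set 'I_n} | (#|beta| == \rank A) && (i \in beta))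
             gpminor (gcol_repl (conjT A *m A) i (col j (conjT A *m B))) beta)
          / (\sum_(beta : {set 'I_n} | #|beta| == \rank A) gpminor (conjT A *m A) beta).
Proof.
move=> hX i j.
have [W hW] := exists_W A B.
have eX := LS_eq hX hW.
have hc : col j (conjT A *m B) = (conjT A *m A) *m col j X.
  by rewrite -hW -eX col_mulmx.
rewrite hc.
have hD := D_gt0 A.
rewrite -(@key n (conjT A *m A) i (col j X) (\rank A)).
- by rewrite mxE mulrC mulKf // lt0r_neq0.
- exact: rank_leq_col.
- move=> S cS; rewrite eX col_mulmx col_repl_mul gpminor_rank //.
  by rewrite rank_conjT cS.
Qed.

Lemma gpminor_setT n (M : 'M[C]_n) : gpminor M setT = \det M.
Proof.
rewrite -det_padR; congr (\det _); apply/matrixP => a b; by rewrite !mxE in_setT.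
Qed.

Lemma card_eqT n (beta : {set 'I_n}) : (#|beta| == n) = (beta == setT).
Proof.
rewrite eqEcard subsetT cardsT card_ord /=.
by rewrite eqn_leq card_set_le.
Qed.

End CPart.

Unset Implicit Arguments. Set Strict Implicit. Set Printing Implicit Defensive.
Local Open Scope complex_scope.

Theorem theorem4p1 (R : realType) (m n s : nat)
  (A : 'M[R[i]]_(m, n)) (B : 'M[R[i]]_(m, s)) (X : 'M[R[i]]_(n, s)) :
  is_min_norm_LS A B X ->
  (forall r : nat, \rank A = r -> (r <= m)%N -> (m < n)%N ->
     forall (i : 'I_n) (j : 'I_s),
       X i j =
         (\sum_(beta : {set 'I_n} | (#|beta| == r) && (i \in beta))
             pminor (col_repl (conjT A *m A) i (col j (conjT A *m B))) beta)
         / (\sum_(beta : {set 'I_n} | #|beta| == r) pminor (conjT A *m A) beta))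
  /\
  (\rank A = n ->
     forall (i : 'I_n) (j : 'I_s),
       X i j = \det (col_repl (conjT A *m A) i (col j (conjT A *m B)))
               / \det (conjT A *m A)).
Proof.
move=> hX; split.
  move=> r hr _ _ i j; rewrite -hr; exact: (main hX i j).
move=> hr i j; rewrite (main hX i j) hr.
rewrite (big_pred1 setT); last by move=> beta; rewrite card_eqT /=; case: eqP => // ->; rewrite in_setT.
rewrite (big_pred1 setT); last by move=> beta; rewrite card_eqT.
by rewrite !gpminor_setT.
Qed.
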